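(* In the setting of the context, suppose $G$ is an anchor subgraph and: (a) edges are $r$-driven; (b) the $T_r$ are independent Bernoulli random variables with probability $p\in(0,1)$; (c) $\{(a,r)\mid u_{ar}\neq0\}\subset G$; (d) $c_{ar}=\mathbb I((a,r)\in G)$; (e) $w_{ar}\neq0$ for all $(a,r)$; (f) $|\{r\mid u_{ar}\neq0\}|>0$ for all $a$. Then for every $a\in\mathcal A$, $$\mathrm{Cov}\left(\widehat{\mathcal W_a(\mathbf 1)}^c,\hat\beta^u_a\right)=0.$$
   Context: Setting (endogenous bipartite interference graph). $\mathcal A$ is a set of $n_a$ analysis units, $\mathcal R$ a set of $n_r$ randomization units. A random treatment vector $\mathbf T=(T_r)_{r\in\mathcal R}\in\{0,1\}^{n_r}$ is assigned; all randomness comes from $\mathbf T$. For each $(a,r)$ there is an unknown edge potential outcome function $E_{ar}:\{0,1\}^{n_r}\to\{0,1\}$ with observed realization $e_{ar}=E_{ar}(\mathbf T)$. Edges are $r$-driven if each $E_{ar}(\mathbf T)$ depends on $\mathbf T$ only through $T_r$. An anchor subgraph is a set $G\subset\mathcal A\times\mathcal R$ with $E_{ar}(\mathbf T)=1$ for all $\mathbf T$ and all $(a,r)\in G$. Outcome model: known real weights $w_{ar}$; $y_a=Y_a(\mathbf T)=\alpha_a+\beta_ax_a$, $x_a=\sum_rT_rE_{ar}(\mathbf T)w_{ar}$, unknown constants $\alpha_a,\beta_a$. Estimators: for fixed real weights $u_{ar},c_{ar}$, $z^u_a=\sum_rT_ru_{ar}$, $\hat\beta^u_a=y_a(z^u_a-\mathbb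 Ez^u_a)/\mathrm{Cov}(x_a,z^u_a)$, $\widehat{\mathcal W_a(\mathbf 1)}^c=\sum_r\left[\frac{T_rw_{ar}(e_{ar}-c_{ar})}{p}+w_{ar}c_{ar}\right]$. *)

(* Defs.v *)
From HB Require Import structures.
From mathcomp Require Import all_boot all_order all_algebra.
Set Implicit Arguments. Unset Strict Implicit. Unset Printing Implicit Defensive.
Import Order.TTheory GRing.Theory Num.Theory.
Local Open Scope ring_scope.

Section Defs.
Variables (K : realFieldType) (Ru : finType).

Definition tvec := {ffun Ru -> bool}.

Definition bern_prob (p : K) (t : tvec) : K :=
  \prod_(r : Ru) (if t r then p else 1 - p).

Definition Ex (p : K) (f : tvec -> K) : K := \sum_(t : tvec) bern_prob p t * f t.

Definition Covar (p : K) (f g : tvec -> K) : K :=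
  Ex p (fun t => f t * g t) - Ex p f * Ex p g.

Definition tnum (t : tvec) (r : Ru) : K := (t r)%:R.
End Defs.

Section Model.
Variables (K : realFieldType) (Au Ru : finType).
Variable (E : Au -> Ru -> tvec Ru -> bool).   (* edge potential outcomes *)
Variable (w : Au -> Ru -> K).

Definition xa (a : Au) (t : tvec Ru) : K :=
  \sum_(r : Ru) tnum K t r * (E a r t)%:R * w a r.

Definition ya (alpha beta : Au -> K) (a : Au) (t : tvec Ru) : K :=
  alpha a + beta a * xa a t.

Definition zu (u : Au -> Ru -> K) (a : Au) (t : tvec Ru) : K :=
  \sum_(r : Ru) tnum K t r * u a r.

Definition beta_hat (p : K) (alpha beta : Au -> K) (u : Au -> Ru -> K)
  (a : Au) (t : tvec Ru) : K :=
  ya alpha beta a t * (zu u a t - Ex p (zu u a)) / Covar p (xa a) (zu u a).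

Definition W_hat (p : K) (c : Au -> Ru -> K) (a : Au) (t : tvec Ru) : K :=
  \sum_(r : Ru) (tnum K t r * w a r * ((E a r t)%:R - c a r) / p + w a r * c a r).

Definition r_driven : Prop :=
  forall a r (t t' : tvec Ru), t r = t' r -> E a r t = E a r t'.

Definition anchor (G : {set Au * Ru}) : Prop :=
  forall a r, (a, r) \in G -> forall t : tvec Ru, E a r t = true.
End Model.

(* Main.v *)
Require Import Defs.
From HB Require Import structures.
From mathcomp Require Import all_boot all_order all_algebra.
Import Order.TTheory GRing.Theory Num.Theory.
Set Implicit Arguments. Unset Strict Implicit. Unset Printing Implicit Defensive.
Local Open Scope ring_scope.
From mathcomp Require Import ring.

Definition upd (Ru : finType) (r : Ru) (b : bool) (t : tvec Ru) : tvec Ru :=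
  [ffun i => if i == r then b else t i].

Lemma upd_at (Ru : finType) r b (t : tvec Ru) : upd r b t r = b.
Proof. by rewrite /upd ffunE eqxx. Qed.

Lemma upd_upd (Ru : finType) r b b' (t : tvec Ru) : upd r b (upd r b' t) = upd r b t.
Proof. by apply/ffunP => i; rewrite !ffunE; case: eqP. Qed.

Lemma upd_id (Ru : finType) r (t : tvec Ru) : upd r (t r) t = t.
Proof. by apply/ffunP => i; rewrite !ffunE; case: eqP => // ->. Qed.

Definition flp (Ru : finType) (r : Ru) (t : tvec Ru) := upd r (~~ t r) t.

Lemma flpK (Ru : finType) (r : Ru) : cancel (flp r) (flp r).
Proof. by move=> t; rewrite /flp upd_at negbK upd_upd upd_id. Qed.

Definition Bm (K : realFieldType) (Ru : finType) (p : K) (r : Ru) (t : tvec Ru) : K :=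
  \prod_(i | i != r) (if t i then p else 1 - p).

Lemma bern_split (K : realFieldType) (Ru : finType) (p : K) r (t : tvec Ru) :
  bern_prob p t = (if t r then p else 1 - p) * Bm p r t.
Proof. by rewrite /bern_prob (bigD1 r). Qed.

Lemma Bm_upd (K : realFieldType) (Ru : finType) (p : K) r b (t : tvec Ru) :
  Bm p r (upd r b t) = Bm p r t.
Proof. by apply: eq_bigr => i /negbTE H; rewrite ffunE H. Qed.

Lemma Ssplit (K : realFieldType) (Ru : finType) r (psi : tvec Ru -> K) :
  \sum_(t : tvec Ru) psi t = \sum_(t : tvec Ru | t r) psi t + \sum_(t : tvec Ru | t r) psi (flp r t).
Proof.
rewrite (bigID (fun t : tvec Ru => t r)) /=; congr (_ + _).
rewrite (reindex_inj (can_inj (flpK r))) /=.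
by apply: eq_bigl => t; rewrite /flp upd_at negbK.
Qed.
Lemma Ex_split (K : realFieldType) (Ru : finType) (p : K) r (F : tvec Ru -> K) :
  Ex p F = p * Ex p (fun t => F (upd r true t)) + (1 - p) * Ex p (fun t => F (upd r false t)).
Proof.
rewrite /Ex (Ssplit r) (Ssplit r (fun t => bern_prob p t * F (upd r true t)))
  (Ssplit r (fun t => bern_prob p t * F (upd r false t))).
rewrite -!big_split !mulr_sumr -big_split /=; apply: eq_bigr => t Ht.
rewrite (bern_split p r t) (bern_split p r (flp r t)) /flp Ht /= upd_at Bm_upd !upd_upd.
have -> : upd r true t = t by rewrite -Ht upd_id.
ring.
Qed.

Lemma Ex_one (K : realFieldType) (Ru : finType) (p : K) :
  Ex p (fun _ : tvec Ru => 1) = 1.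
Proof.
rewrite /Ex /bern_prob.
under eq_bigr do rewrite mulr1.
rewrite -(bigA_distr_bigA (fun (i : Ru) (b : bool) => if b then p else 1 - p)).
by apply: big1 => i _; rewrite big_bool /= addrC subrK.
Qed.

Lemma Ex_ext (K : realFieldType) (Ru : finType) (p : K) (f g : tvec Ru -> K) :
  f =1 g -> Ex p f = Ex p g.
Proof. by move=> H; apply: eq_bigr => t _; rewrite H. Qed.

Lemma Ex_add (K : realFieldType) (Ru : finType) (p : K) (f g : tvec Ru -> K) :
  Ex p (fun t => f t + g t) = Ex p f + Ex p g.
Proof. by rewrite /Ex -big_split; apply: eq_bigr => t _; rewrite mulrDr. Qed.

Lemma Ex_scale (K : realFieldType) (Ru : finType) (p : K) k (f : tvec Ru -> K) :
  Ex p (fun t => k * f t) = k * Ex p f.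
Proof. by rewrite /Ex mulr_sumr; apply: eq_bigr => t _; rewrite mulrCA. Qed.

Lemma Ex_const (K : realFieldType) (Ru : finType) (p : K) k :
  Ex p (fun _ : tvec Ru => k) = k.
Proof.
rewrite (@Ex_ext _ _ p _ (fun _ => k * 1)); last by move=> t; rewrite mulr1.
by rewrite Ex_scale Ex_one mulr1.
Qed.

Lemma Ex_sum (K : realFieldType) (Ru I : finType) (p : K) (F : I -> tvec Ru -> K) :
  Ex p (fun t => \sum_i F i t) = \sum_i Ex p (F i).
Proof.
rewrite /Ex exchange_big /=; apply: eq_bigr => t _; by rewrite mulr_sumr.
Qed.

Lemma indep (K : realFieldType) (Ru : finType) (p : K) r (h : bool -> K) (G : tvec Ru -> K) :
  (forall b t, G (upd r b t) = G t) ->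
  Ex p (fun t => h (t r) * G t) = Ex p (fun t => h (t r)) * Ex p G.
Proof.
move=> HG; rewrite (Ex_split p r) (Ex_split p r (fun t => h (t r))).
under [X in p * X]Ex_ext do rewrite HG upd_at.
under [X in (1 - p) * X]Ex_ext do rewrite HG upd_at.
under [X in _ = (p * X + _) * _]Ex_ext do rewrite upd_at.
under [X in _ = (_ + _ * X) * _]Ex_ext do rewrite upd_at.
by rewrite !Ex_scale !Ex_const; ring.
Qed.

Lemma Covar_sum (K : realFieldType) (Ru I : finType) (p : K) (F : I -> tvec Ru -> K) g :
  Covar p (fun t => \sum_i F i t) g = \sum_i Covar p (F i) g.
Proof.
rewrite /Covar sumrB; congr (_ - _).
  rewrite -Ex_sum; apply: Ex_ext => t; by rewrite mulr_suml.
by rewrite Ex_sum mulr_suml.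
Qed.

Lemma Covar_ext (K : realFieldType) (Ru : finType) (p : K) (f1 f2 g1 g2 : tvec Ru -> K) :
  f1 =1 f2 -> g1 =1 g2 -> Covar p f1 g1 = Covar p f2 g2.
Proof.
move=> H1 H2; rewrite /Covar (Ex_ext p H1) (Ex_ext p H2); congr (_ - _).
by apply: Ex_ext => t; rewrite H1 H2.
Qed.

Unset Implicit Arguments.

Theorem lemma2 (K : realFieldType) (Au Ru : finType)
  (E : Au -> Ru -> tvec Ru -> bool) (w u c : Au -> Ru -> K)
  (alpha beta : Au -> K) (p : K) (G : {set Au * Ru}) :
  anchor E G ->
  r_driven E ->
  0 < p < 1 ->
  (forall a r, u a r != 0 -> (a, r) \in G) ->
  (forall a r, c a r = if (a, r) \in G then 1 else 0) ->
  (forall a r, w a r != 0) ->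
  (forall a, (0 < #|[set r | (u a r != 0)%R]|)%N) ->
  forall a : Au,
    Covar p (W_hat E w p c a) (beta_hat E w p alpha beta u a) = 0.
Proof.
move=> Hanc Hrd _ Hu Hc _ _ a.
set Y := beta_hat E w p alpha beta u a.
pose f r t := tnum K t r * w a r * ((E a r t)%:R - c a r) / p + w a r * c a r.
rewrite (_ : W_hat E w p c a = fun t => \sum_r f r t) // Covar_sum.
apply: big1 => r _.
case: (boolP ((a, r) \in G)) => HG.
  have H1 : f r =1 (fun _ => w a r).
    by move=> t; rewrite /f Hc HG (Hanc a r HG t) /= mulr1n subrr !mulr0 mul0r add0r mulr1.
  rewrite (@Covar_ext _ _ p _ _ Y Y H1 (fun _ => erefl)) /Covar /=.
  by rewrite Ex_scale Ex_const subrr.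
have ur : u a r = 0 by apply/eqP; apply: contraNT HG; exact: Hu.
pose h b := f r [ffun => b].
have H1 : f r =1 (fun t => h (t r)).
  move=> t; rewrite /h /f /tnum ffunE (Hrd a r t [ffun => t r]) //.
  by rewrite ffunE.
pose Z t := zu u a t - Ex p (zu u a).
pose C := Covar p (xa E w a) (zu u a).
pose Xm t := \sum_(i | i != r) tnum K t i * (E a i t)%:R * w a i.
pose h2 (b : bool) := b%:R * (E a r [ffun => b])%:R * w a r.
pose G1 t := beta a / C * Z t.
pose Q t := (alpha a + beta a * Xm t) / C * Z t.
have H2 : Y =1 (fun t => h2 (t r) * G1 t + Q t).
  move=> t; rewrite /Y /beta_hat /ya /xa (bigD1 r) //= /h2 /G1 /Q /Xm /Z /C /tnum.
  rewrite (Hrd a r t [ffun => t r]) ?ffunE //.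
  ring.
have Zinv : forall b t, Z (upd r b t) = Z t.
  move=> b t; rewrite /Z /zu; congr (_ - _); apply: eq_bigr => i _.
  rewrite /tnum /upd ffunE; case: eqP => [->|//]; by rewrite ur !mulr0.
have Xminv : forall b t, Xm (upd r b t) = Xm t.
  move=> b t; rewrite /Xm; apply: eq_bigr => i /negbTE Hi.
  have e : upd r b t i = t i by rewrite /upd ffunE Hi.
  by rewrite /tnum e (Hrd a i (upd r b t) t e).
have G1inv : forall b t, G1 (upd r b t) = G1 t by move=> b t; rewrite /G1 Zinv.
have Qinv : forall b t, Q (upd r b t) = Q t by move=> b t; rewrite /Q Zinv Xminv.
have EZ : Ex p Z = 0.
  rewrite (@Ex_ext _ _ p Z (fun t => zu u a t + (fun _ => - Ex p (zu u a)) t)) //.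
  by rewrite Ex_add Ex_const subrr.
have EG1 : Ex p G1 = 0 by rewrite /G1 Ex_scale EZ mulr0.
rewrite (@Covar_ext _ _ p _ _ _ _ H1 H2) /Covar /=.
rewrite (@Ex_ext _ _ p _ (fun t => (fun b => h b * h2 b) (t r) * G1 t + h (t r) * Q t)); last first.
  by move=> t /=; ring.
rewrite Ex_add (Ex_add p (fun t => h2 (t r) * G1 t)).
rewrite (indep p (fun b => h b * h2 b) G1inv) (indep p h Qinv) (indep p h2 G1inv) EG1.
ring.
Qed.
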